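(* For every integer $j$ with $j\geq 20$ or $j\in\{15,16,17\}$, we have $R_1^{\mathcal{BIP}}(4,j)=2j-1$, where $\mathcal{BIP}$ is the class of bipartite graphs.
   Context: All graphs are finite and simple. For a graph $G$ and a nonnegative integer $k$, a $k$-sparse $j$-set is a set of $j$ vertices of $G$ inducing a subgraph of maximum degree at most $k$; a $k$-dense $i$-set is a set of $i$ vertices of $G$ that is $k$-sparse in the complement of $G$. For a graph class $\mathcal{G}$, $R_k^{\mathcal{G}}(i,j)$ is the smallest natural number $n$ such that every graph on $n$ vertices in $\mathcal{G}$ has either a $k$-dense $i$-set or a $k$-sparse $j$-set. *)

(* Defs.v *)
From mathcomp Require Import all_boot.
Set Implicit Arguments. Unset Strict Implicit. Unset Printing Implicit Defensive.

Definition simple_graph (T : finType) (e : rel T) : Prop :=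
  irreflexive e /\ symmetric e.

Definition compl_graph (T : finType) (e : rel T) : rel T :=
  fun x y => (x != y) && ~~ e x y.

Definition k_sparse (T : finType) (e : rel T) (k : nat) (S : {set T}) : bool :=
  [forall x in S, #|[set y in S | e x y]| <= k].

Definition k_dense (T : finType) (e : rel T) (k : nat) (S : {set T}) : bool :=
  k_sparse (compl_graph e) k S.

Definition bipartite (T : finType) (e : rel T) : Prop :=
  exists c : T -> bool, forall x y, e x y -> c x != c y.

Definition bip_ramsey_prop (k i j n : nat) : Prop :=
  forall e : rel 'I_n, simple_graph e -> bipartite e ->
    (exists S : {set 'I_n}, #|S| = i /\ k_dense e k S) \/
    (exists S : {set 'I_n}, #|S| = j /\ k_sparse e k S).

Definition is_bip_ramsey (k i j n : nat) : Prop :=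
  bip_ramsey_prop k i j n /\ forall m, m < n -> ~ bip_ramsey_prop k i j m.

(* Main.v *)
Require Import Defs.
From mathcomp Require Import all_boot.
From mathcomp Require Import zify.
Set Implicit Arguments. Unset Strict Implicit. Unset Printing Implicit Defensive.

Definition T7 : seq (seq nat) := [:: [:: 0; 1; 3]; [:: 1; 2; 4]; [:: 2; 3; 5]; [:: 3; 4; 6]; [:: 0; 4; 5]; [:: 1; 5; 6]; [:: 0; 2; 6]].
Definition T8 : seq (seq nat) := [:: [:: 0; 1; 2]; [:: 1; 3; 4]; [:: 2; 4; 5]; [:: 1; 5; 6]; [:: 0; 3; 6]; [:: 3; 5; 7]; [:: 0; 4; 7]; [:: 2; 6; 7]].
Definition T12 : seq (seq nat) := [:: [:: 3; 4; 5]; [:: 2; 3; 8; 10]; [:: 1; 3; 7; 11]; [:: 0; 1; 2]; [:: 0; 5; 8; 11]; [:: 0; 4; 7; 10]; [:: 9; 10; 11]; [:: 2; 5; 7; 9]; [:: 1; 4; 8; 9]; [:: 6; 7; 8]; [:: 1; 5; 6; 10]; [:: 2; 4; 6; 11]].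
Definition T13 : seq (seq nat) := [:: [:: 1; 4; 7; 10]; [:: 0; 4; 5; 6]; [:: 3; 4; 9; 11]; [:: 2; 4; 8; 12]; [:: 0; 1; 2; 3]; [:: 1; 6; 9; 12]; [:: 1; 5; 8; 11]; [:: 0; 10; 11; 12]; [:: 3; 6; 8; 10]; [:: 2; 5; 9; 10]; [:: 0; 7; 8; 9]; [:: 2; 6; 7; 11]; [:: 3; 5; 7; 12]].

Definition tab (t : nat) : seq (seq nat) :=
  if t == 7 then T7 else if t == 8 then T8 else if t == 12 then T12 else T13.

Definition badj (t u v : nat) : bool :=
  ((u < t) && (t <= v < t + t) && (v - t \in nth [::] (tab t) u)) ||
  ((v < t) && (t <= u < t + t) && (u - t \in nth [::] (tab t) v)).

Fixpoint subseqs (l : seq nat) : seq (seq nat) :=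
  if l is x :: l' then let r := subseqs l' in r ++ map (cons x) r else [:: [::]].

Definition nbX t (X : seq nat) y := count (fun x => (x \in X) && badj t x y) (iota 0 t).

Definition bnd t X :=
  let ys := [seq (y, nbX t X y) | y <- iota t t] in
  count (fun p => p.2 == 0) ys +
  count (fun x => (x \in X) && has (fun p => badj t x p.1 && (p.2 == 1)) ys) (iota 0 t).

Definition chk t := all (fun X => count (mem X) (iota 0 t) + bnd t X <= t) (subseqs (iota 0 t)).

Definition chk2 t := all (fun u => all (fun v => (u == v) ||
   (count (fun w => badj t u w && badj t v w) (iota 0 (t + t)) <= 1)) (iota 0 (t + t))) (iota 0 (t + t)).

Definition blk t := (t == 7) || (t == 8) || (t == 12) || (t == 13).

Lemma chk_all : all (fun t => chk t && chk2 t) [:: 7; 8; 12; 13].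
Proof. vm_compute. reflexivity. Qed.

Lemma blk_chk t : blk t -> chk t /\ chk2 t.
Proof.
move=> bt; have /allP H := chk_all.
have : t \in [:: 7; 8; 12; 13] by rewrite !inE; move: bt; rewrite /blk -!orbA.
by move/H/andP.
Qed.

Lemma badj_sym t u v : badj t u v = badj t v u.
Proof. by rewrite /badj orbC. Qed.

Lemma badj_bnd t u v : badj t u v -> [/\ u < t + t, v < t + t & (u < t) != (v < t)].
Proof.
rewrite /badj => /orP[] /andP[] /andP[] h1 /andP[h2 h3] _; split => //; try lia.
Qed.

Lemma count2 (P : pred nat) s a b : a \in s -> b \in s -> a != b -> P a -> P b -> 1 < count P s.
Proof.
move=> ha hb ab Pa Pb; rewrite -size_filter.
have : uniq [:: a; b] by rewrite /= inE ab.
move/uniq_leq_size => /(_ (filter P s)); apply => x; rewrite !inE mem_filter.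
by case/orP => /eqP ->; rewrite ?Pa ?Pb.
Qed.

Lemma subseqs_mem l s : subseq s l -> s \in subseqs l.
Proof.
elim: l s => [|x l IH] [|y s] //=.
- by move=> _; rewrite mem_cat IH ?sub0seq.
- case: ifP => [/eqP -> | _] h; rewrite mem_cat.
  + by apply/orP; right; rewrite mem_map ?IH //; move=> ? ? [].
  + by rewrite IH.
Qed.

Lemma blk_codeg t u v w1 w2 : blk t -> badj t u w1 -> badj t v w1 -> badj t u w2 -> badj t v w2 ->
  u != v -> w1 != w2 -> False.
Proof.
move=> /blk_chk [_ /allP H2] a1 b1 a2 b2 uv w12.
have [hu hw1 _] := badj_bnd a1; have [hv _ _] := badj_bnd b1; have [_ hw2 _] := badj_bnd a2.
have /H2 /allP /(_ v) : u \in iota 0 (t + t) by rewrite mem_iota.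
rewrite mem_iota /= hv (negbTE uv) /= => /(_ isT).
have := @count2 (fun w => badj t u w && badj t v w) (iota 0 (t + t)) w1 w2.
rewrite !mem_iota /= hw1 hw2 a1 b1 a2 b2 => /(_ isT isT w12 isT isT). lia.
Qed.

Lemma head_filter (P : pred nat) l : has P l -> let h := head 0 (filter P l) in h \in l /\ P h.
Proof.
rewrite has_filter => ne /=.
have : head 0 (filter P l) \in filter P l by case: (filter P l) ne => //= ? ?; rewrite mem_head.
by rewrite mem_filter => /andP[].
Qed.

Lemma blk_sparse t s : blk t -> uniq s -> all (fun x => x < t + t) s ->
  (forall x, x \in s -> count (badj t x) s <= 1) -> size s <= t.
Proof.
move=> /blk_chk [/allP H1 _] us /allP alls sp.
set X := filter (mem s) (iota 0 t).
have /H1 : X \in subseqs (iota 0 t) by apply: subseqs_mem; apply: filter_subseq.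
rewrite /bnd count_map /= => hb.
apply: leq_trans hb.
have memX x : (x \in X) = (x \in s) && (x < t).
  by rewrite mem_filter mem_iota /= andbC.
have nb1 y : y \in s -> nbX t X y <= 1.
  move=> ys; apply: leq_trans (sp y ys); rewrite /nbX -!size_filter.
  apply: uniq_leq_size; first by apply: filter_uniq; apply: iota_uniq.
  move=> x; rewrite !mem_filter => /andP[/andP[/andP[xs _] bxy] _].
  by rewrite badj_sym bxy; exact: xs.
rewrite -(count_predC (fun x => x < t) s) leq_add //.
  rewrite -!size_filter; apply: uniq_leq_size; first exact: filter_uniq.
  move=> x; rewrite !mem_filter mem_iota /= => /andP[xt xs].
  by rewrite memX xs xt.
set Y := filter (predC (fun x => x < t)) s.
have Ysub y : y \in Y -> [/\ y \in s, t <= y & y < t + t].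
  rewrite mem_filter /= -leqNgt => /andP[ty ys]; split => //; exact: alls.
have uY : uniq Y by exact: filter_uniq.
rewrite -size_filter -/Y -(count_predC (fun y => nbX t X y == 0) Y) leq_add //.
  rewrite -!size_filter; apply: uniq_leq_size; first exact: filter_uniq.
  move=> y; rewrite mem_filter => /andP[h yY]; rewrite mem_filter /= h /=; have [_ ty yt] := Ysub y yY.
  by rewrite mem_iota ty yt.
rewrite -size_filter; set Y1 := filter _ Y.
set f := fun y => head 0 (filter (fun x => (x \in X) && badj t x y) (iota 0 t)).
have fP y : y \in Y1 -> [/\ f y \in iota 0 t, f y \in X, badj t (f y) y & nbX t X y == 1].
  rewrite mem_filter /= => /andP[nz yY].
  have [ys _ _] := Ysub y yY.
  have hn : has (fun x => (x \in X) && badj t x y) (iota 0 t).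
    by rewrite has_count lt0n.
  have [h1 /andP[h2 h3]] := head_filter hn.
  split => //. have := nb1 y ys. move: nz; rewrite /nbX. lia.

have -> : size Y1 = size (map f Y1) by rewrite size_map.
rewrite -size_filter; apply: uniq_leq_size.
  rewrite map_inj_in_uniq; first exact: filter_uniq.
  move=> y1 y2 h1 h2 e; apply/eqP; apply/negPn/negP => ne.
  have [_ fX1 b1 _] := fP y1 h1; have [_ _ b2 _] := fP y2 h2.
  rewrite -e in b2.
  have fs : f y1 \in s by move: fX1; rewrite memX => /andP[].
  have y1s : y1 \in s by move: h1; rewrite !mem_filter => /and3P[_ _].
  have y2s : y2 \in s by move: h2; rewrite !mem_filter => /and3P[_ _].
  have := sp _ fs; have := count2 y1s y2s ne b1 b2. lia.
move=> x /mapP [y yY1 ->]; have [i1 i2 i3 i4] := fP y yY1.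
rewrite mem_filter i1 i2 /= andbT; apply/hasP; exists (y, nbX t X y) => //=.
  have [_ ty yt] := Ysub y (mem_subseq (filter_subseq _ _) yY1).
  by apply: map_f; rewrite mem_iota ty yt.
by rewrite i3 i4.
Qed.
Fixpoint gadj (bs : seq nat) (u v : nat) : bool :=
  if bs is t :: bs' then
    (if u < t + t then badj t u v else (t + t <= v) && gadj bs' (u - (t + t)) (v - (t + t)))
  else false.

Fixpoint gcol (bs : seq nat) (u : nat) : bool :=
  if bs is t :: bs' then (if u < t + t then u < t else gcol bs' (u - (t + t))) else false.

Fixpoint tot (bs : seq nat) : nat := if bs is t :: bs' then t + tot bs' else 0.

Lemma gadj_sym bs u v : gadj bs u v = gadj bs v u.
Proof.
elim: bs u v => [|t bs IH] u v //=.
case: (ltnP u (t + t)) => hu; case: (ltnP v (t + t)) => hv.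
- exact: badj_sym.
- by apply/negP => /badj_bnd [_]; rewrite ltnNge hv.
- by apply/esym/negP => /badj_bnd [_]; rewrite ltnNge hu.
- by rewrite IH.
Qed.

Lemma gadj_col bs u v : gadj bs u v -> gcol bs u != gcol bs v.
Proof.
elim: bs u v => [|t bs IH] u v //=.
case: (ltnP u (t + t)) => hu.
- by case/badj_bnd => _ -> .
- case/andP => hv h; rewrite ltnNge hv /=; exact: IH.
Qed.

Lemma gadj_irr bs u : gadj bs u u = false.
Proof. by apply/negP => /gadj_col; rewrite eqxx. Qed.

Lemma gadj_codeg bs u v w1 w2 : all blk bs ->
  gadj bs u w1 -> gadj bs v w1 -> gadj bs u w2 -> gadj bs v w2 -> u != v -> w1 != w2 -> False.
Proof.
elim: bs u v w1 w2 => [|t bs IH] u v w1 w2 //= /andP[bt ab].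
case: (ltnP u (t + t)) => hu; case: (ltnP v (t + t)) => hv.
- exact: blk_codeg.
- by move=> /badj_bnd [_ h _] /andP[h' _]; move: h'; rewrite leqNgt h.
- by move=> /andP[h' _] /badj_bnd [_ h _]; move: h'; rewrite leqNgt h.
- move=> /andP[h1 a1] /andP[_ b1] /andP[h2 a2] /andP[_ b2] uv w12.
  apply: (IH _ _ _ _ ab a1 b1 a2 b2); apply/negP => /eqP; lia.
Qed.

Lemma gadj_sparse bs s : all blk bs -> uniq s -> all (fun x => x < tot bs + tot bs) s ->
  (forall x, x \in s -> count (gadj bs x) s <= 1) -> size s <= tot bs.
Proof.
elim: bs s => [|t bs IH] s /=.
  by move=> _ _; case: s => //= x s; rewrite ltn0.
move=> /andP[bt ab] us /allP als sp.
set T := t + t.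
rewrite -(count_predC (fun x => x < T) s) leq_add //.
  rewrite -size_filter; apply: blk_sparse => //; first exact: filter_uniq.
    by apply/allP => x; rewrite mem_filter => /andP[].
  move=> x; rewrite mem_filter => /andP[xT xs].
  rewrite count_filter; apply: leq_trans (sp x xs).
  rewrite /= xT; apply: sub_count => y /= /andP[-> _] //.
rewrite -size_filter.
set s2 := filter _ s.
have -> : size s2 = size (map (subn^~ T) s2) by rewrite size_map.
apply: IH => //.
- rewrite map_inj_in_uniq; first exact: filter_uniq.
  move=> x y; rewrite !mem_filter /= -!leqNgt => /andP[hx _] /andP[hy _] e; lia.
- apply/allP => x /mapP [y]; rewrite mem_filter /= -leqNgt => /andP[hy ys] ->.
  have := als y ys; lia.
- move=> x /mapP [y]; rewrite mem_filter /= -leqNgt => /andP[hy ys] ->.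
  rewrite count_map count_filter; apply: leq_trans (sp y ys).
  rewrite /= ltnNge hy /=; apply: sub_count => z /= /andP[h1 h2].
  by rewrite h1 andbT leqNgt.
Qed.

Definition base (n : nat) : seq nat :=
  if n == 14 then [:: 7; 7] else if n == 15 then [:: 7; 8] else if n == 16 then [:: 8; 8]
  else if n == 19 then [:: 7; 12] else if n == 20 then [:: 8; 12]
  else if n == 21 then [:: 7; 7; 7] else if n == 22 then [:: 7; 7; 8]
  else if n == 23 then [:: 7; 8; 8] else if n == 24 then [:: 8; 8; 8]
  else [:: 12; 13].

Fixpoint dec (k n : nat) : seq nat :=
  if k is k'.+1 then (if n < 26 then base n else 7 :: dec k' (n - 7)) else base n.

Definition good n := (19 <= n) || ((14 <= n) && (n <= 16)).

Lemma base_ok : all (fun n => good n ==> (tot (base n) == n) && all blk (base n)) (iota 0 26).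
Proof. by []. Qed.

Lemma dec_ok k n : good n -> n < k + 26 -> tot (dec k n) = n /\ all blk (dec k n).
Proof.
have hb n' : good n' -> n' < 26 -> tot (base n') = n' /\ all blk (base n').
  move=> g lt; have /allP /(_ n') := base_ok; rewrite mem_iota /= lt g => /(_ isT).
  by case/andP => /eqP.
elim: k n => [|k IH] n g lt /=; first exact: hb.
case: ifP => h; first exact: hb.
have g' : good (n - 7) by move: g h; rewrite /good; lia.
have [h1 h2] := IH (n - 7) g' ltac:(lia).
split; last by rewrite /= h2.
by rewrite /= h1; lia.
Qed.

Lemma card_filter_enum (N : nat) (S : {set 'I_N}) (P : pred 'I_N) :
  #|[set y in S | P y]| = count P (enum S).
Proof.
rewrite -size_filter; have /card_uniqP <- := filter_uniq P (enum_uniq (mem S)).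
by apply: eq_card => y; rewrite !inE mem_filter mem_enum andbC.
Qed.

Lemma upper j : bip_ramsey_prop 1 4 j (2 * j - 1).
Proof.
move=> e [irr sym] [c hc]; right.
pose A := [set x | c x].
have hcard := cardsC A; rewrite card_ord in hcard.
suff key : forall C : {set 'I_(2 * j - 1)}, j <= #|C| ->
    (forall x y, x \in C -> y \in C -> c x = c y) ->
    exists S : {set 'I_(2 * j - 1)}, #|S| = j /\ k_sparse e 1 S.
  case: (leqP j #|A|) => h; first by apply: (key A h) => x y; rewrite !inE => -> ->.
  apply: (key (~: A)).
  by rewrite -(leq_add2l #|A|) hcard; lia.
  by move=> x y; rewrite !inE => /negbTE -> /negbTE ->.
move=> C hC hcol.
exists [set x in take j (enum C)]; split.
  rewrite cardsE; have /card_uniqP -> : uniq (take j (enum C)) by apply: take_uniq; exact: enum_uniq.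
  by rewrite size_takel // -cardE.
apply/forallP => x; apply/implyP; rewrite inE => /mem_take; rewrite mem_enum => xC.
rewrite (_ : [set y in _ | e x y] = set0) ?cards0 //.
apply/setP => y; rewrite !inE; apply/negP => /andP[/mem_take]; rewrite mem_enum => yC exy.
by have := hc _ _ exy; rewrite (hcol x y xC yC) eqxx.
Qed.

Lemma aux4 a b : a + b = 4 -> 2 <= a -> b <= 2.
Proof. lia. Qed.

Lemma lower n m : good n -> m <= n + n -> ~ bip_ramsey_prop 1 4 n.+1 m.
Proof.
move=> g hm H.
have [htot hblk] := dec_ok (k := n) g ltac:(lia).
set bs := dec n n in htot hblk.
pose e := fun u v : 'I_m => gadj bs u v.
have se : simple_graph e.
  split; first by move=> x; rewrite /e gadj_irr.
  by move=> x y; rewrite /e gadj_sym.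
have be : bipartite e by exists (fun x : 'I_m => gcol bs x) => x y; apply: gadj_col.
case: (H e se be) => [[S [cS dS]] | [S [cS sS]]].
-
  have deg2 : forall x, x \in S -> 2 <= #|[set y in S | e x y]|.
    move=> x xS.
    pose C : {set 'I_m} := [set y in S | compl_graph e x y].
    pose E : {set 'I_m} := [set y in S | e x y].
    change (2 <= #|E|).
    have hC : #|C| <= 1 by have := forallP dS x; rewrite xS.
    have sub : S \subset [set x] :|: C :|: E.
      apply/subsetP => y yS; rewrite !inE yS /= /compl_graph.
      by case: (y =P x) => [-> | /eqP ne] //=; rewrite eq_sym ne /=; case: (e x y).
    have h1 := subset_leq_card sub.
    have h2 := leq_card_setU ([set x] :|: C) E.
    have h3 := leq_card_setU [set x] C.
    rewrite cards1 cS in h1 h3.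
    have h4 := leq_trans h1 h2.
    have h5 := leq_add h3 (leqnn #|E|).
    have := leq_trans h4 h5. lia.
  have ecol x y : e x y -> gcol bs x != gcol bs y by apply: gadj_col.
  pose P := [set x in S | gcol bs x]; pose Q := [set x in S | ~~ gcol bs x].
  have nbP x : x \in S -> gcol bs x -> [set y in S | e x y] \subset Q.
    move=> xS cx; apply/subsetP => y; rewrite !inE => /andP[-> /ecol].
    by rewrite cx; case: (gcol bs y).
  have nbQ x : x \in S -> ~~ gcol bs x -> [set y in S | e x y] \subset P.
    move=> xS cx; apply/subsetP => y; rewrite !inE => /andP[-> /ecol].
    by move: cx; case: (gcol bs y); case: (gcol bs x).
  have hPQ : #|P| + #|Q| = 4.
    rewrite -cS -(cardsID [set x : 'I_m | gcol bs x] S); congr (_ + _); apply: eq_card => x.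
      by rewrite !inE andbC.
    by rewrite !inE andbC.
  have [x0 x0S] : exists x, x \in S by apply/card_gt0P; rewrite cS.
  have hP2 : 2 <= #|P| /\ 2 <= #|Q|.
    case cx0 : (gcol bs x0).
    + have hQ := leq_trans (deg2 _ x0S) (subset_leq_card (nbP _ x0S cx0)).
      have [y yQ] : exists y, y \in Q by apply/card_gt0P; lia.
      move: (yQ); rewrite inE => /andP[yS cy].
      have := leq_trans (deg2 _ yS) (subset_leq_card (nbQ _ yS cy)); lia.
    + have hP := leq_trans (deg2 _ x0S) (subset_leq_card (nbQ _ x0S (negbT cx0))).
      have [y yP] : exists y, y \in P by apply/card_gt0P; lia.
      move: (yP); rewrite inE => /andP[yS cy].
      have := leq_trans (deg2 _ yS) (subset_leq_card (nbP _ yS cy)); lia.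
  have [x1 [x2 [x1P x2P ne12]]] : exists x1 x2, [/\ x1 \in P, x2 \in P & x1 != x2].
    by apply/card_gt1P; lia.
  have [y1 [y2 [y1Q y2Q ne]]] : exists y1 y2, [/\ y1 \in Q, y2 \in Q & y1 != y2].
    by apply/card_gt1P; lia.
  have full x : x \in P -> [set y in S | e x y] = Q.
    move=> xP; move: (xP); rewrite inE => /andP[xS cx].
    apply/eqP; rewrite eqEcard nbP //=; apply: leq_trans (deg2 _ xS); case: hP2 => h _; exact: (aux4 hPQ h).
  have adj x y : x \in P -> y \in Q -> e x y.
    by move=> xP yQ; move: yQ; rewrite -(full x xP) inE => /andP[].
  apply: (@gadj_codeg bs x1 x2 y1 y2 hblk); try exact: adj.
    by apply/eqP => /val_inj /eqP; rewrite (negbTE ne12).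
  by apply/eqP => /val_inj /eqP; rewrite (negbTE ne).
-
  have := @gadj_sparse bs (map val (enum S)) hblk.
  rewrite size_map -cardE cS htot.
  have -> : uniq (map val (enum S)) by rewrite map_inj_uniq ?enum_uniq //; apply: val_inj.
  move=> /(_ isT); have -> : all (fun x => x < n + n) (map val (enum S)).
    by apply/allP => x /mapP [y _ ->]; exact: leq_trans (ltn_ord y) hm.
  move=> /(_ isT); rewrite ltnn => hh; suff : false by []; apply: hh.
  move=> x /mapP [y]; rewrite mem_enum => yS ->.
  rewrite count_map -card_filter_enum.
  by have := forallP sS y; rewrite yS.
Qed.

Theorem theorem5p4 (j : nat) (hj : (20 <= j) \/ (j = 15 \/ j = 16 \/ j = 17)) :
  is_bip_ramsey 1 4 j (2 * j - 1).
Proof.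
split; first exact: upper.
move=> m hm.
have hj1 : j = (j - 1).+1 by case: hj => [|[|[]]] => h; lia.
rewrite hj1; apply: lower; last lia.
by rewrite /good; case: hj => [|[|[]]] => h; lia.
Qed.
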